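(* Let $W$ be a (1-safe) DAW-net, $\mathrm{bc}(W)$ its $\mathcal{BC}$ encoding, and $\mathit{TS}_{\mathrm{bc}(W)}=(\mathcal{A},S,S_0,\delta)$ the transition system it induces. Then (1) $S_0$ is a singleton $\{s_0\}$; and (2) if $(s,A,s')\in\delta$ then $|A|=1$.
   Context: **DAW-nets.** Data model $\mathcal{D}=(\mathcal{V},\Delta,\mathrm{dm},\mathrm{ord})$ (variables; finite domains via total surjective $\mathrm{dm}$; partial orders on some domains); assignments are partial functions $\eta$ with $\eta(v)\in\mathrm{dm}(v)$; guards $\Phi::=\mathit{true}\mid\mathrm{def}(v)\mid t_1=t_2\mid t_1\le t_2\mid\neg\Phi\mid\Phi\wedge\Phi$. A DAW-net $W=\langle\mathcal{D},(P,T,F),\mathrm{wr},\mathrm{gd}\rangle$: a workflow Petri net with places $\mathit{start},\mathit{sink}$, presets ${}^\bullet t$, postsets $t^\bullet$; partial functions $\mathrm{wr}(t)$ with $\mathrm{wr}(t)(v)\subseteq\mathrm{dm}(v)$; guards $\mathrm{gd}(t)$. $\mathcal{V}'$: finite set of variables of $W$; $\mathrm{adm}(v)=\bigcup_t\mathrm{wr}(t)(v)$. $W$ is assumed 1-safe. **$\mathcal{BC}$ semantics.** Fluents have finite domains; laws: dynamic ''$A_0$ after $A'_1,\dots,A'_n$ ifcons $A_{n+1},\dots,A_m$'' ($A_0$ an atom $f=v$ or false; $A'_j$ atoms or action constants), static ''$A_0$ if ... ifcons ...'', ''initially $f=v$''. $P_\ell(B)$ is the disjunctive program (classical negation $\neg$,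 default negation $\sim$) containing: static laws as $i{:}A_0\leftarrow i{:}A_1,\dots,i{:}A_n,\sim\neg(i{:}A_{n+1}),\dots,\sim\neg(i{:}A_m)$, $0\le i\le\ell$; dynamic laws as $i{+}1{:}A_0\leftarrow i{:}A'_1,\dots,i{:}A'_n,\sim\neg(i{+}1{:}A_{n+1}),\dots,\sim\neg(i{+}1{:}A_m)$, $0\le i<\ell$ (constraints if $A_0$ is false); facts $0{:}f=v$ for ''initially $f=v$''; $0{:}f=v\vee\neg(0{:}f=v)$ for all fluents and values; $i{:}a\vee\neg(i{:}a)$ for action constants, $i<\ell$; and for $i\le\ell$ and fluent $f$ with domain $v_1,\dots,v_k$: $\leftarrow\sim(i{:}f=v_1),\dots,\sim(i{:}f=v_k)$ and $\neg(i{:}f=v)\leftarrow i{:}f=w$ ($v\ne w$). For a stable model (answer set) $X$ of $P_\ell(B)$ put $\sigma_i(X)=\{f\mapsto o\mid(i{:}f=o)\in X\}$. $\mathit{TS}_B=(\mathcal{A},S,S_0,\delta)$: $S_0=\{\sigma_0(X)\mid X$ stable model of $P_0(B)\}$; $S,\delta$ least with $S_0\subseteq S$ and, whenever $X$ is a stable model of $P_{\ell+1}(B)$ ($\ell\ge0$) with $\sigma_\ell(X)\in S$, $\sigma_{\ell+1}(X)\in S$ and $(\sigma_\ell(X),\{a\mid(\ell{:}a)\in X\},\sigma_{\ell+1}(X))\in\delta$. **The encoding $\mathrm{bc}(W)$.** Fluents $v\in\mathcal{V}'$ with domain $\mathrm{adm}(v)\cup\{\mathrm{null}\}$, Boolean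 fluents $p\in P$ and $\mathit{trans}$; action constants $t\in T$. Laws: ''$v=o$ after $v=o$ ifcons $v=o$''; ''$p=o$ after $p=o$ ifcons $p=o$''; for each $t$: ''$p=\mathrm{false}$ after $t$'' ($p\in{}^\bullet t\setminus t^\bullet$), ''$p=\mathrm{true}$ after $t$'' ($p\in t^\bullet\setminus{}^\bullet t$), ''$v=d$ after $t$ ifcons $v=d$'' ($d\in\mathrm{wr}(t)(v)$), ''$v=\mathrm{null}$ after $t$'' ($\mathrm{wr}(t)(v)=\emptyset$), ''false after $t$ ifcons $v=d$'' ($\mathrm{wr}(t)(v)\neq\emptyset$, $d\in\{\mathrm{null}\}\cup\mathrm{adm}(v)\setminus\mathrm{wr}(t)(v)$), ''false after $t,s$'' ($t\ne s$), ''false after $t,p=\mathrm{false}$'' ($p\in{}^\bullet t$), ''$\mathit{trans}=\mathrm{true}$ after $t$''; ''initially $\mathit{start}=\mathrm{true}$'', ''initially $p=\mathrm{false}$'' ($p\ne\mathit{start}$), ''initially $v=\mathrm{null}$'', ''initially $\mathit{trans}=\mathrm{true}$''; and for each $t$ with $\mathrm{gd}(t)\not\equiv\mathit{true}$, for a chosen formula $\bigvee_k t^k_1\wedge\dots\wedge t^k_{n_k}$ equivalent to $\neg\mathrm{gd}(t)$ with terms $v=o$ or $\neg\mathrm{def}(v)$, the laws ''false after $t,[\![t^k_1]\!],\dots,[\![t^k_{n_k}]\!]$'', where $[\![v=o]\!]=(v=o)$, $[\![\neg\mathrm{def}(v)]\!]=(v=\mathrm{null})$. *)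

(* Defs.v *)
From Stdlib Require Import List.
From mathcomp Require Import all_boot.
Set Implicit Arguments.
Unset Strict Implicit.
Unset Printing Implicit Defensive.

(* atoms usable after "after": fluent atoms f = o, or action constants a *)
Inductive batom (F O A : Type) : Type :=
| BF (f : F) (o : O)
| BA (a : A).

(* dynamic law  "A0 after A'_1,...,A'_n ifcons A_{n+1},...,A_m"
   (dhead = None encodes A0 = false) *)
Record dyn_law (F O A : Type) : Type := mkDyn {
  dhead   : option (F * O);
  dafter  : seq (batom F O A);
  difcons : seq (F * O) }.

(* static law  "A0 if A_1,...,A_n ifcons A_{n+1},...,A_m" *)
Record stat_law (F O : Type) : Type := mkStat {
  shead   : option (F * O);
  sif     : seq (F * O);
  sifcons : seq (F * O) }.

Record BCdesc : Type := mkBC {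
  bF : Type;
  bO : Type;
  bA : Type;
  bdom : bF -> seq bO;
  bstat : stat_law bF bO -> Prop;
  bdyn  : dyn_law bF bO bA -> Prop;
  binit : bF * bO -> Prop }.

(* time-stamped atoms  i:f=o  and  i:a ; literals with classical negation *)
Inductive tatom (F O A : Type) : Type :=
| TF (i : nat) (f : F) (o : O)
| TA (i : nat) (a : A).

Inductive lit (F O A : Type) : Type :=
| LPos (x : tatom F O A)
| LNeg (x : tatom F O A).

(* disjunctive rule  L_1 v ... v L_k <- B_1,...,B_n, ~C_1,...,~C_m
   (empty head = constraint) *)
Record rule (F O A : Type) : Type := mkRule {
  rhead : seq (lit F O A);
  rpos  : seq (lit F O A);
  rneg  : seq (lit F O A) }.

Definition program (F O A : Type) := rule F O A -> Prop.
Definition litset (F O A : Type) := lit F O A -> Prop.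

(* Y is closed under the Gelfond-Lifschitz reduct P^X *)
Definition closed_reduct F O A (P : program F O A) (X Y : litset F O A) :=
  forall r, P r ->
    (forall L, In L (rneg r) -> ~ X L) ->
    (forall L, In L (rpos r) -> Y L) ->
    exists L, In L (rhead r) /\ Y L.

Definition consistent F O A (X : litset F O A) :=
  forall x, ~ (X (LPos x) /\ X (LNeg x)).

Definition stable F O A (P : program F O A) (X : litset F O A) :=
  [/\ consistent X,
      closed_reduct P X X &
      forall Y : litset F O A, (forall L, Y L -> X L) ->
        closed_reduct P X Y -> forall L, X L -> Y L].

Section BCsem.
Variable B : BCdesc.
Notation F := (bF B).
Notation O := (bO B).
Notation A := (bA B).

Definition head_lits (i : nat) (h : option (F * O)) : seq (lit F O A) :=
  match h with None => [::] | Some (f, o) => [:: LPos (TF A i f o)] end.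
Definition pos_fl (i : nat) (fo : F * O) : lit F O A := LPos (TF A i fo.1 fo.2).
(* literal L such that "~ L" in the body means  ~ not(i:f=o) *)
Definition neg_fl (i : nat) (fo : F * O) : lit F O A := LNeg (TF A i fo.1 fo.2).
Definition batom_lit (i : nat) (b : batom F O A) : lit F O A :=
  match b with BF f o => LPos (TF A i f o) | BA a => LPos (TA F O i a) end.

Inductive Prog (l : nat) : program F O A :=
| P_static i s : i <= l -> @bstat B s ->
    Prog l (mkRule (head_lits i (shead s)) (map (pos_fl i) (sif s))
                   (map (neg_fl i) (sifcons s)))
| P_dynamic i d : i < l -> @bdyn B d ->
    Prog l (mkRule (head_lits i.+1 (dhead d)) (map (batom_lit i) (dafter d))
                   (map (neg_fl i.+1) (difcons d)))
| P_init f o : @binit B (f, o) ->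
    Prog l (mkRule [:: LPos (TF A 0 f o)] [::] [::])
| P_choice0 f o : In o (@bdom B f) ->
    Prog l (mkRule [:: LPos (TF A 0 f o); LNeg (TF A 0 f o)] [::] [::])
| P_choiceA i a : i < l ->
    Prog l (mkRule [:: LPos (TA F O i a); LNeg (TA F O i a)] [::] [::])
| P_exists i f : i <= l ->
    Prog l (mkRule [::] [::] (map (fun o => LPos (TF A i f o)) (@bdom B f)))
| P_unique i f v w : i <= l -> In v (@bdom B f) -> In w (@bdom B f) -> v <> w ->
    Prog l (mkRule [:: LNeg (TF A i f v)] [:: LPos (TF A i f w)] [::]).

(* states are the (partial) functions sigma_i(X) = {f |-> o | i:f=o in X},
   represented by their graphs *)
Definition state := F -> O -> Prop.
Definition sigma (i : nat) (X : litset F O A) : state :=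
  fun f o => X (LPos (TF A i f o)).
Definition actions (i : nat) (X : litset F O A) : A -> Prop :=
  fun a => X (LPos (TA F O i a)).

Definition TS_S0 (s : state) : Prop :=
  exists X, stable (Prog 0) X /\ s = sigma 0 X.

Inductive TS_S : state -> Prop :=
| TS_S_init s : TS_S0 s -> TS_S s
| TS_S_step l X : stable (Prog l.+1) X -> TS_S (sigma l X) ->
    TS_S (sigma l.+1 X).

Definition TS_delta (s : state) (As : A -> Prop) (s' : state) : Prop :=
  exists l X, [/\ stable (Prog l.+1) X, TS_S (sigma l X),
                  s = sigma l X, As = actions l X & s' = sigma l.+1 X].

End BCsem.

Inductive gterm (V D : Type) : Type :=
| TVar (v : V)
| TConst (c : D).

Inductive guard (V D : Type) : Type :=
| GTrue
| GDef (v : V)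
| GEq (t1 t2 : gterm V D)
| GLe (t1 t2 : gterm V D)
| GNot (g : guard V D)
| GAnd (g1 g2 : guard V D).

Record DAWnet : Type := mkDAW {
  Var : finType;
  Val : eqType;
  Dom : Type;
  delts : Dom -> seq Val;
  dm  : Var -> Dom;
  ord : Dom -> option (rel Val);       (* partial order on some domains  *)
  (* Petri net (P, T, F):  pre t = .t = {p | (p,t) in F},
                           post t = t. = {p | (t,p) in F} *)
  Place : finType;
  Trans : finType;
  pre  : Trans -> {set Place};
  post : Trans -> {set Place};
  start : Place;
  sink  : Place;
  (* wr(t) is a partial function: None = v not in dom(wr(t));
     Some ws = wr(t)(v) is the (finite) set of elements of ws *)
  wr : Trans -> Var -> option (seq Val);
  gd : Trans -> guard Var Val }.

Section DAW.
Variable W : DAWnet.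
Notation V := (Var W).
Notation D := (Val W).
Notation P := (Place W).
Notation T := (Trans W).
Notation pstart := (start W).
Notation psink := (sink W).

Definition dm_surjective := forall d : Dom W, exists v, dm v = d.

Definition is_partial_order (xs : seq D) (le : rel D) :=
  [/\ forall x, x \in xs -> le x x,
      forall x y, x \in xs -> y \in xs -> le x y -> le y x -> x = y &
      forall x y z, x \in xs -> y \in xs -> z \in xs ->
        le x y -> le y z -> le x z].

Definition ord_ok :=
  forall (d : Dom W) le, ord d = Some le -> is_partial_order (delts d) le.

Definition wr_ok :=
  forall (t : T) (v : V) ws, wr t v = Some ws ->
    forall x, x \in ws -> x \in delts (dm v).

Definition flow : rel (P + T)%type :=
  fun n m => match n, m with
             | inl p, inr t => p \in pre t
             | inr t, inl p => p \in post t
             | _, _ => false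
             end.

Definition workflow_net :=
  [/\ forall t : T, pstart \notin post t,
      forall t : T, psink \notin pre t &
      forall n : (P + T)%type,
        connect flow (inl pstart) n && connect flow n (inl psink)].

Definition DAW_wf : Prop := [/\ dm_surjective, ord_ok, wr_ok & workflow_net].

Definition assignment := V -> option D.
Definition legal (eta : assignment) :=
  forall v x, eta v = Some x -> x \in delts (dm v).

Definition teval (eta : assignment) (t : gterm V D) : option D :=
  match t with TVar v => eta v | TConst c => Some c end.

Fixpoint gholds (eta : assignment) (g : guard V D) : Prop :=
  match g with
  | GTrue => True
  | GDef v => eta v <> None
  | GEq t1 t2 => exists x, teval eta t1 = Some x /\ teval eta t2 = Some x
  | GLe t1 t2 => exists x y d le,
      [/\ teval eta t1 = Some x, teval eta t2 = Some y, ord d = Some le,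
          (x \in delts d) && (y \in delts d) & le x y]
  | GNot g => ~ gholds eta g
  | GAnd g1 g2 => gholds eta g1 /\ gholds eta g2
  end.

Definition gvalid (g : guard V D) := forall eta, legal eta -> gholds eta g.

Definition marking := P -> nat.

Definition fire (M : marking) (eta : assignment) (t : T)
                (M' : marking) (eta' : assignment) : Prop :=
  [/\ forall p, p \in pre t -> 1 <= M p,
      gholds eta (gd t),
      forall p, M' p = M p - (p \in pre t) + (p \in post t) &
      forall v, match wr t v with
                | None => eta' v = eta v
                | Some ws => if ws is [::] then eta' v = None
                             else exists2 x, x \in ws & eta' v = Some x
                end].

Definition M0 : marking := fun p => if p == pstart then 1 else 0.
Definition eta0 : assignment := fun _ => None.

Inductive reachable : marking -> assignment -> Prop :=
| reach0 : reachable M0 eta0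
| reachS M eta t M' eta' :
    reachable M eta -> fire M eta t M' eta' -> reachable M' eta'.

Definition one_safe := forall M eta, reachable M eta -> forall p, M p <= 1.

Inductive bcF : Type := FV (v : V) | FP (p : P) | FT.
Inductive bcO : Type := ONull | OD (x : D) | OB (b : bool).

Definition adm (v : V) : seq D :=
  flatten [seq odflt [::] (wr t v) | t <- enum T].

Definition bcdom (f : bcF) : seq bcO :=
  match f with
  | FV v => ONull :: map OD (adm v)
  | FP _ | FT => [:: OB true; OB false]
  end.

(* literals of the chosen DNF of ~gd(t): "v = o" or "~def(v)" *)
Inductive dnf_lit : Type := DEq (v : V) (o : D) | DUndef (v : V).

Definition dnf_lit_holds (eta : assignment) (l : dnf_lit) : Prop :=
  match l with DEq v o => eta v = Some o | DUndef v => eta v = None end.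

Definition dnf_ok (dnf : T -> seq (seq dnf_lit)) :=
  forall t, ~ gvalid (gd t) ->
    forall eta, legal eta ->
      (~ gholds eta (gd t) <->
       exists2 k, In k (dnf t) & forall l, In l k -> dnf_lit_holds eta l).

Definition enc (l : dnf_lit) : batom bcF bcO T :=
  match l with DEq v o => @BF bcF bcO T (FV v) (OD o) | DUndef v => @BF bcF bcO T (FV v) ONull end.

Inductive bc_dyn (dnf : T -> seq (seq dnf_lit)) : dyn_law bcF bcO T -> Prop :=
| d_inert_var v o : In o (bcdom (FV v)) ->
    bc_dyn dnf (mkDyn (Some (FV v, o)) [:: @BF bcF bcO T (FV v) o] [:: (FV v, o)])
| d_inert_place p o : In o (bcdom (FP p)) ->
    bc_dyn dnf (mkDyn (Some (FP p, o)) [:: @BF bcF bcO T (FP p) o] [:: (FP p, o)])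
| d_consume t p : p \in pre t -> p \notin post t ->
    bc_dyn dnf (mkDyn (Some (FP p, OB false)) [:: BA bcF bcO t] [::])
| d_produce t p : p \in post t -> p \notin pre t ->
    bc_dyn dnf (mkDyn (Some (FP p, OB true)) [:: BA bcF bcO t] [::])
| d_write t v ws d : wr t v = Some ws -> d \in ws ->
    bc_dyn dnf (mkDyn (Some (FV v, OD d)) [:: BA bcF bcO t] [:: (FV v, OD d)])
| d_delete t v : wr t v = Some [::] ->
    bc_dyn dnf (mkDyn (Some (FV v, ONull)) [:: BA bcF bcO t] [::])
| d_restrict t v ws o : wr t v = Some ws -> ws <> [::] ->
    (o = ONull \/ exists2 x, o = OD x & (x \in adm v) && (x \notin ws)) ->
    bc_dyn dnf (mkDyn None [:: BA bcF bcO t] [:: (FV v, o)])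
| d_excl t s : t <> s ->
    bc_dyn dnf (mkDyn None [:: BA bcF bcO t; BA bcF bcO s] [::])
| d_enabled t p : p \in pre t ->
    bc_dyn dnf (mkDyn None [:: BA bcF bcO t; @BF bcF bcO T (FP p) (OB false)] [::])
| d_trans t :
    bc_dyn dnf (mkDyn (Some (FT, OB true)) [:: BA bcF bcO t] [::])
| d_guard t k : ~ gvalid (gd t) -> In k (dnf t) ->
    bc_dyn dnf (mkDyn None (BA bcF bcO t :: map enc k) [::]).

Inductive bc_init : bcF * bcO -> Prop :=
| i_start : bc_init (FP pstart, OB true)
| i_place p : p <> pstart -> bc_init (FP p, OB false)
| i_var v : bc_init (FV v, ONull)
| i_trans : bc_init (FT, OB true).

Definition bc (dnf : T -> seq (seq dnf_lit)) : BCdesc :=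
  @mkBC bcF bcO T bcdom (fun _ => False) (bc_dyn dnf) bc_init.

End DAW.

(* Main.v *)
Require Import Defs.
From Stdlib Require Import List Classical FunctionalExtensionality PropExtensionality.
From mathcomp Require Import all_boot.

Lemma support F O A (P : program F O A) X L : stable P X -> X L ->
  exists r, [/\ P r, In L (rhead r), (forall L', In L' (rneg r) -> ~ X L') &
                (forall L', In L' (rpos r) -> X L')].
Proof.
move=> [Hc Hcl Hmin] XL; apply: NNPP => H.
have [] : (fun L' => X L' /\ L' <> L) L; last by [].
apply: (Hmin (fun L0 => X L0 /\ L0 <> L)) => //; first by move=> ? [].
move=> r Pr Hneg Hpos.
have Hpos' : forall L', In L' (rpos r) -> X L' by move=> ? /Hpos [].
case: (Hcl r Pr Hneg Hpos') => L0 [inL0 XL0].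
exists L0; split => //; split => // eqL; apply: H; exists r; subst; split => //.
Qed.

Arguments support {F O A P X L}.
Section Proofs.
Variable W : DAWnet.
Variable dnf : Trans W -> seq (seq (dnf_lit W)).

Lemma init_uniq (f : bcF W) o o' : bc_init (f, o) -> bc_init (f, o') -> o = o'.
Proof.
move=> H1 H2; inversion H1; subst; inversion H2; subst => //; congruence.
Qed.

Lemma init_ex f : exists2 o, @bc_init W (f, o) & In o (bcdom f).
Proof.
case: f => [v|p|].
- by exists (ONull W); [constructor | left].
- case: (p =P start W) => [->|ne].
  + by exists (OB W true); [constructor | left].
  + by exists (OB W false); [constructor | right; left].
- by exists (OB W true); [constructor | left].
Qed.

Definition X0 : litset (bcF W) (bcO W) (Trans W) := fun L =>
  (exists f o, L = LPos (TF _ 0 f o) /\ bc_init (f, o)) \/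
  (exists f o o', [/\ L = LNeg (TF _ 0 f o), In o (bcdom f), bc_init (f, o') & o <> o']).

Lemma X0_stable : stable (@Prog (bc dnf) 0) X0.
Proof.
split.
- move=> x [[[f [o [e H]]]|[f [o [o' [e _ _ _]]]]] [[f1 [o1 [e1 H1]]]|[f1 [o1 [o1' [e1 _ H1 ne]]]]]]; try discriminate.
  apply: ne; injection e as ->; injection e1 as <- <-; exact: init_uniq H H1.
- move=> r Pr Hneg Hpos; case: Pr Hneg Hpos => //=.
  + move=> f o Hi _ _; exists (LPos (TF _ 0 f o)); split; first by left.
    by left; exists f, o.
  + move=> f o Hin _ _; case: (init_ex f) => o' Hi Hin'.
    case: (classic (o = o')) => [->|ne].
    * exists (LPos (TF _ 0 f o')); split; first by left. by left; exists f, o'.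
    * exists (LNeg (TF _ 0 f o)); split; first by right; left.
      by right; exists f, o, o'.
  + move=> i f; rewrite leqn0 => /eqP -> Hneg _; exfalso.
    case: (init_ex f) => o' Hi Hin'.
    apply: (Hneg (LPos (TF _ 0 f o'))); last by left; exists f, o'.
    by apply/in_map_iff; exists o'.
  + move=> i f v w; rewrite leqn0 => /eqP -> Hv Hw ne _ Hpos.
    have [[f1 [o1 [e1 H1]]]|[? [? [? [e1 _ _ _]]]]] := Hpos _ (or_introl erefl); last by [].
    case: e1 => <- <- in H1.
    exists (LNeg (TF _ 0 f v)); split; first by left.
    by right; exists f, v, w.
- move=> Y HY Hcl L [[f [o [-> H]]]|[f [o [o' [-> Hin Hi ne]]]]].
  + have [L0 [[<-|[]] //]] := Hcl _ (@P_init (bc dnf) 0 f o H) (fun _ x => match x with end) (fun _ x => match x with end).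
  + case: (init_ex f) => o'' Hi' Hin'.
    have eo : o'' = o' by exact: init_uniq Hi' Hi.
    subst o''.
    have Hp : Y (LPos (TF _ 0 f o')).
      have [L0 [[<-|[]] //]] := Hcl _ (@P_init (bc dnf) 0 f o' Hi) (fun _ x => match x with end) (fun _ x => match x with end).
    have Hp' : forall L', In L' [:: LPos (TF (Trans W) 0 f o')] -> Y L'.
      by move=> L' [<-|[]].
    have [L0 [[<-|[]] //]] := Hcl _ (@P_unique (bc dnf) 0 0 f o o' (leqnn 0) Hin Hin' ne)
       (fun _ x => match x with end) Hp'.
Qed.


Lemma init_in {X f o} : stable (@Prog (bc dnf) 0) X -> bc_init (f, o) -> X (LPos (TF _ 0 f o)).
Proof.
move=> [_ Hcl _] H.
by have [L0 [[<-|[]] //]] := Hcl _ (@P_init (bc dnf) 0 f o H) (fun _ x => match x with end) (fun _ x => match x with end).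
Qed.

Lemma stable0_sigma X f o : stable (@Prog (bc dnf) 0) X ->
  X (LPos (TF _ 0 f o)) <-> bc_init (f, o).
Proof.
move=> st; split; last exact: init_in.
move=> XL; have [r [Pr Hin Hneg Hpos]] := support st XL.
destruct Pr => //=; simpl in Hin.
- by case: Hin => [[<- <-]|[]].
- case: Hin => [[ef eo]|[//|[]]]; subst.
  case: (init_ex f) => o' Hi Hin'.
  case: (classic (o = o')) => [->//|ne].
  have Hp := init_in st Hi.
  have Hp' : forall L', In L' [:: LPos (TF (Trans W) 0 f o')] -> X L'.
    by move=> L' [<-|[]].
  case: st => Hc Hcl _.
  have [L0 [[<-|[]] XN]] := Hcl _ (@P_unique (bc dnf) 0 0 f o o' (leqnn 0) H Hin' ne)
       (fun _ x => match x with end) Hp'.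
  by case: (Hc (TF _ 0 f o)).
- by case: Hin => [|[]].
Qed.

Lemma one_action l X : stable (@Prog (bc dnf) l.+1) X ->
  exists a, forall b, X (LPos (TA _ _ l b)) <-> b = a.
Proof.
move=> st.
have [o XT] : exists o, X (LPos (TF _ l.+1 (FT W) o)).
  apply: NNPP => H; case: st => _ Hcl _.
  have Hn : forall L', In L' (rneg (mkRule [::] [::]
      (map (fun o => LPos (TF (Trans W) l.+1 (FT W) o)) (bcdom (FT W))))) -> ~ X L'.
    move=> L' /= HL XL; apply: H; case: HL XL => [<-|[<-|[]]] XL; by eexists; exact: XL.
  by have [L0 [[] _]] := Hcl _ (@P_exists (bc dnf) l.+1 l.+1 (FT W) (leqnn _))
     Hn (fun _ x => match x with end).
have [r [Pr Hin Hneg Hpos]] := support st XT.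
have [a Xa] : exists a, X (LPos (TA _ _ l a)).
  destruct Pr => //=; simpl in Hin.
  - have Hd : bc_dyn dnf d := H0; clear H0; destruct Hd; simpl in Hin;
      try (case: Hin => [e|[]]; discriminate); try (by case: Hin).
    case: Hin => [e|[]]; case: e => <-; exists t.
    by apply: Hpos; left.
  1-4: repeat (case: Hin => [e|Hin]; [discriminate|]); by case: Hin.
exists a => b; split => [Xb|->//].
apply: NNPP => ne; case: st => _ Hcl _.
have Hp : forall L', In L' [:: LPos (TA _ _ l b); LPos (TA _ _ l a)] -> X L'.
  by move=> L' [<-|[<-|[]]].
have [L0 [[] _]] := Hcl _ (@P_dynamic (bc dnf) l.+1 l _ (ltnSn l) (@d_excl W dnf b a ne))
   (fun _ x => match x with end) Hp.
Qed.

End Proofs.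

Theorem mainTheorem5 (W : DAWnet) (dnf : Trans W -> seq (seq (dnf_lit W))) :
  DAW_wf W -> one_safe W -> dnf_ok dnf ->
  (exists s0, forall s, @TS_S0 (bc dnf) s <-> s = s0) /\
  (forall s As s', @TS_delta (bc dnf) s As s' ->
     exists a, forall b, As b <-> b = a).
Proof.
move=> _ _ _; split.
- exists (fun f o => @bc_init W (f, o)) => s; split.
  + move=> [X [st ->]]; apply: functional_extensionality => f.
    apply: functional_extensionality => o; apply: propositional_extensionality.
    exact: stable0_sigma st.
  + move=> ->; exists (X0 W); split; first exact: X0_stable.
    apply: functional_extensionality => f.
    apply: functional_extensionality => o; apply: propositional_extensionality.
    by apply: iff_sym; apply: stable0_sigma; apply: X0_stable.
- move=> s As s' [l [X [st _ _ -> _]]].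
  exact: one_action st.
Qed.
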